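(* Let $k\ge1$ and $c\in\mathcal{S}_k^\beta$. Then $w_{Hom}(c)=q^{sk-1}$ if $\nu(c)=s-1$; $w_{Hom}(c)=q^{sk-k-1}(q^k-1)$ if $\nu(c)<s-1$; and $w_{Hom}(c)=0$ otherwise.
   Context: Let $R$ be a finite commutative chain ring with maximal ideal $\langle\gamma\rangle$, nilpotency index $s$ and residue field $R/\langle\gamma\rangle\cong\mathbb{F}_q$. Fix coset representatives $T=\{e_0,\dots,e_{q-1}\}$ with $e_0=0,e_1=1$, ordered $e_0<\dots<e_{q-1}$; each $r\in R$ is uniquely $\sum_{i=0}^{s-1}r_i\gamma^i$, $r_i\in T$; order $R$ by $x>y$ iff $x_i>y_i$ in $T$ for the largest $i$ with $x_i\neq y_i$; list $R=\{\rho_0,\dots,\rho_{q^s-1}\}$ increasingly. $\mathbf{a}^{(m)}$ is the constant vector of length $m$. Define $G_1^\alpha=(\rho_0\ \cdots\ \rho_{q^s-1})$ and, for $k>1$, $G_k^\alpha$ as the matrix of $q^s$ column blocks, the $j$-th having first row $\boldsymbol{\rho_j}^{(q^{s(k-1)})}$ and $G_{k-1}^\alpha$ below. List $\langle\gamma\rangle$ increasingly as $a_0\gamma<\dots<a_{q^{s-1}-1}\gamma$. Define $G_1^\beta=(1)$ and, for $k>1$, $G_k^\beta$ as the matrix with column blocks: first a block with first row $\mathbf{1}^{(q^{s(k-1)})}$ and $G_{k-1}^\alpha$ below; then for each $j=0,\dots,q^{s-1}-1$ a block with first row the constant vector with entry $a_j\gamma$ and $G_{k-1}^\beta$ below. $\mathcal{S}_k^\beta$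 is the $R$-submodule generated by the rows of $G_k^\beta$. Homogeneous weight: for $x\in R$, $w_{Hom}(x)=0$ if $x=0$; $(q-1)q^{s-2}$ if $x\neq0$, $x\notin\langle\gamma^{s-1}\rangle$; $q^{s-1}$ if $x\neq0$, $x\in\langle\gamma^{s-1}\rangle$; extended to vectors by summing over coordinates. Valuation: for $x\in R\setminus\{0\}$, $\nu(x)$ is the largest $m$ with $x=\gamma^m\beta$, $\beta$ a unit; $\nu(0)=\infty$; for $x\in R^n$, $\nu(x)=\min_i\nu(x_i)$. *)

(* Defs.v *)
From HB Require Import structures.
From mathcomp Require Import all_boot all_order all_algebra.
Set Implicit Arguments. Unset Strict Implicit. Unset Printing Implicit Defensive.
Import GRing.Theory.
Local Open Scope ring_scope.

Section ChainRing.
Variables (R : finComUnitRingType) (gamma : R) (s : nat) (T : seq R).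

(* q = size of the residue field = number of coset representatives *)
Definition qT : nat := size T.

Definition in_gpow (m : nat) (x : R) : Prop := exists y : R, x = y * gamma ^+ m.

(* Increasing enumeration rho_0 < ... < rho_{q^s-1} of R: the element whose
   gamma-adic digits (in T, indexed by position in T) are the base-q digits
   of j, with digit i = coefficient of gamma^i. *)
Definition rho (j : nat) : R :=
  \sum_(i < s) T`_((j %/ qT ^ i) %% qT)%N * gamma ^+ i.

(* increasing listing of <gamma>: a_j gamma = rho (q * j) *)
Definition agamma (j : nat) : R := rho (qT * j)%N.

Fixpoint nbeta (k : nat) : nat :=
  match k with
  | 0 => 0%N
  | k'.+1 => if k' == 0%N then 1%N else (qT ^ (s * k') + qT ^ (s - 1) * nbeta k')%N
  end.

(* entry (row r, column j), 0-indexed, of G_k^alpha *)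
Fixpoint Galpha (k r j : nat) : R :=
  match k with
  | 0 => 0
  | k'.+1 =>
    if k' == 0%N then rho j
    else match r with
         | 0 => rho (j %/ qT ^ (s * k'))
         | r'.+1 => Galpha k' r' (j %% qT ^ (s * k'))
         end
  end.

Fixpoint Gbeta (k r j : nat) : R :=
  match k with
  | 0 => 0
  | k'.+1 =>
    if k' == 0%N then 1
    else if (j < qT ^ (s * k'))%N then
           match r with
           | 0 => 1
           | r'.+1 => Galpha k' r' j
           end
         else
           let j' := (j - qT ^ (s * k'))%N in
           match r with
           | 0 => agamma (j' %/ nbeta k')
           | r'.+1 => Gbeta k' r' (j' %% nbeta k')
           end
  end.

Definition Gbeta_mx (k : nat) : 'M[R]_(k, nbeta k) :=
  \matrix_(r < k, j < nbeta k) Gbeta k r j.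

Definition wHom (x : R) : nat :=
  if x == 0 then 0%N
  else if [exists y : R, x == y * gamma ^+ (s - 1)] then (qT ^ (s - 1))%N
  else ((qT - 1) * qT ^ (s - 2))%N.

Definition wHom_vec (n : nat) (c : 'rV[R]_n) : nat := (\sum_(j < n) wHom (c ord0 j))%N.

Definition is_nu (x : R) (m : nat) : Prop :=
  (exists2 b : R, b \is a GRing.unit & x = gamma ^+ m * b) /\
  (forall (m' : nat) (b : R), b \is a GRing.unit -> x = gamma ^+ m' * b -> (m' <= m)%N).

(* nu(c) = m for a vector: minimum of the valuations of the coordinates
   (zero coordinates have valuation infinity) *)
Definition vnu (n : nat) (c : 'rV[R]_n) (m : nat) : Prop :=
  (exists i : 'I_n, is_nu (c ord0 i) m) /\
  (forall (i : 'I_n) (m' : nat), is_nu (c ord0 i) m' -> (m <= m')%N).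

End ChainRing.

(* Main.v *)
Require Import Defs.
From HB Require Import structures.
From mathcomp Require Import all_boot all_order all_algebra.
From mathcomp Require Import zify ring lra.
From Stdlib Require Import FunctionalExtensionality Classical.
Set Implicit Arguments. Unset Strict Implicit. Unset Printing Implicit Defensive.
Import GRing.Theory.
Local Open Scope ring_scope.

Section Chain.
Variables (R : finComUnitRingType) (gamma : R) (s : nat) (T : seq R).
Hypothesis hmax : forall x : R, x \isn't a GRing.unit <-> in_gpow gamma 1 x.
Hypothesis hs0 : (0 < s)%N.
Hypothesis hs : gamma ^+ s = 0.
Hypothesis hs1 : gamma ^+ (s - 1) != 0.
Hypothesis hT0 : T`_0 = 0.
Hypothesis hT1 : T`_1 = 1.
Hypothesis hT : forall x : R, exists! i : 'I_(size T), in_gpow gamma 1 (x - T`_i).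

Local Notation q := (size T).

Lemma nonunitP (x : R) : reflect (exists y, x = y * gamma) (x \isn't a GRing.unit).
Proof. apply: (iffP idP) => [/hmax [y ->]|[y ->]]; first by exists y; rewrite expr1.
by apply/hmax; exists y; rewrite expr1. Qed.

Lemma nonunit_gmul (y : R) : (gamma * y) \isn't a GRing.unit.
Proof. by apply/nonunitP; exists y; rewrite mulrC. Qed.

Lemma nonunitD (x y : R) : x \isn't a GRing.unit -> y \isn't a GRing.unit -> (x + y) \isn't a GRing.unit.
Proof. move=> /nonunitP[a ->] /nonunitP[b ->]; apply/nonunitP; exists (a + b); by rewrite mulrDl. Qed.

Lemma gpow_eq0 j : gamma ^+ j = 0 -> (s <= j)%N.
Proof. move=> hj; rewrite leqNgt; apply/negP => ltjs.
move/eqP: hs1; apply; rewrite -(subnK (_ : j <= s - 1)%N) ?exprD ?hj ?mulr0 //; lia. Qed.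

Lemma gpow_neq0 j : (j < s)%N -> gamma ^+ j != 0.
Proof. move=> h; apply/eqP => /gpow_eq0; lia. Qed.

Lemma unit_gpow_eq0 j (u : R) : u \is a GRing.unit -> gamma ^+ j * u = 0 -> (s <= j)%N.
Proof. move=> hu h; apply: gpow_eq0; by rewrite -[gamma ^+ j]mulr1 -(mulrV hu) mulrA h mul0r. Qed.

Lemma F1aux n : (n <= s)%N -> forall x, (exists y, x = gamma ^+ n * y) \/
  exists m u, [/\ (m < n)%N, u \is a GRing.unit & x = gamma ^+ m * u].
Proof.
elim: n => [_ x|n IH hn x]; first by left; exists x; rewrite expr0 mul1r.
case: (IH (ltnW hn) x) => [[y ->]|[m [u [h1 h2 h3]]]]; last by right; exists m, u; split => //; lia.
case: (boolP (y \is a GRing.unit)) => hy; first by right; exists n, y.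
move/nonunitP: hy => [z ->]; left; exists z; by rewrite exprSr -!mulrA [gamma * z]mulrC.
Qed.

Lemma F1 (x : R) : x != 0 -> exists m u, [/\ (m < s)%N, u \is a GRing.unit & x = gamma ^+ m * u].
Proof. move=> hx; case: (F1aux (leqnn s) x) => [[y hy]|//]. by rewrite hy hs mul0r eqxx in hx. Qed.

Lemma annP (x : R) : gamma * x = 0 -> exists d, x = gamma ^+ (s - 1) * d.
Proof.
have [->|hx] := eqVneq x 0; first by exists 0; rewrite mulr0.
move=> h; have [m [u [hm hu ex]]] := F1 hx.
have hsm : (s <= m.+1)%N by apply: (unit_gpow_eq0 hu); rewrite exprS -mulrA -ex.
exists (gamma ^+ (m - (s - 1)) * u); rewrite ex mulrA -exprD; congr (_ ^+ _ * _); lia.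
Qed.


Lemma card_sum (P : pred R) : #|P| = \sum_(x : R) (P x : nat)%N.
Proof. rewrite -sum1_card big_mkcond; apply: eq_bigr => x _; by rewrite unfold_in; case: (P x). Qed.

Lemma card_transl (P : pred R) (t : R) : #|[pred x | P (x + t)%R]| = #|P|.
Proof.
rewrite !card_sum (reindex_inj (addIr (- t)%R)) /=.
by apply: eq_bigr => x _; rewrite addrNK.
Qed.

Lemma fiber_card (f : R -> R) (fD : forall x y, f (x + y)%R = (f x + f y)%R) r0 :
  #|[pred r | f r == f r0]| = #|[pred r | f r == 0%R]|.
Proof.
rewrite !card_sum (reindex_inj (addIr r0)) /=.
apply: eq_bigr => x _; rewrite fD -{2}[f r0]add0r.
by rewrite (inj_eq (addIr _)).
Qed.

Definition Ann j := [pred x : R | gamma ^+ j * x == 0%R].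

Lemma sum_gmul (f : R -> nat) :
  \sum_(r : R) f (gamma * r)%R = (#|Ann 1| * \sum_(a : R | a \isn't a GRing.unit) f a)%N.
Proof.
rewrite (partition_big (fun r => gamma * r)%R (fun a => a \isn't a GRing.unit)) => [|r _];
  last exact: nonunit_gmul.
rewrite big_distrr /=; apply: eq_bigr => a /nonunitP [y ->].
rewrite (eq_bigr (fun _ => f (y * gamma)%R)); last by move=> r /eqP ->.
rewrite sum_nat_const; congr (_ * _)%N.
transitivity #|[pred r | (gamma * r == gamma * y)%R]|.
  by apply: eq_card => r; rewrite !inE [y * _]mulrC.
rewrite (@fiber_card (fun r => gamma * r)%R) => [|x z]; last by rewrite /= mulrDr.
by []. Qed.

Lemma cardR_NU : #|R| = (q * #|[pred a : R | a \isn't a GRing.unit]|)%N.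
Proof.
have e : forall x : R, \sum_(i < q) ((x - T`_i)%R \isn't a GRing.unit : nat) = 1.
  move=> x; have [i0 [hi0 hu]] := hT x.
  rewrite (bigD1 i0) //= big1 => [|j hj].
    by move/hmax: hi0 => ->.
  apply/eqP; rewrite eqb0; apply/negP => /hmax /hu ej.
  by rewrite ej eqxx in hj.
rewrite -sum1_card (eq_bigr _ (fun x _ => esym (e x))).
rewrite exchange_big /=. transitivity (\sum_(i < q) #|[pred a : R | a \isn't a GRing.unit]|)%N; last by rewrite sum_nat_const card_ord.
apply: eq_bigr => i _.
by rewrite -(card_transl _ (- T`_i)) card_sum; apply: eq_bigr => x _; rewrite !inE.
Qed.

Lemma NU_pos : (0 < #|[pred a : R | a \isn't a GRing.unit]|)%N.
Proof. apply/card_gt0P; exists 0%R; by rewrite inE unitr0. Qed.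

Lemma cardAnn1 : #|Ann 1| = q.
Proof.
have := sum_gmul (fun _ => 1); rewrite sum1_card sum1_card cardR_NU.
move/eqP; rewrite eqn_mul2r (negbTE (lt0n_neq0 NU_pos)) /= => /eqP.
by [].
Qed.
Lemma q_ge2 : (2 <= q)%N.
Proof.
rewrite leqNgt; apply/negP => h; have h1 : (size T <= 1)%N by lia.
move: hT1; rewrite nth_default //.
by move/eqP; rewrite eq_sym oner_eq0.
Qed.

Lemma q_gt0 : (0 < q)%N.
Proof. by have := q_ge2; lia. Qed.

Lemma sum_nonunit_full (F : R -> nat) :
  (forall a, a \is a GRing.unit -> F a = 0%N) ->
  (\sum_(a : R | a \isn't a GRing.unit) F a = \sum_(a : R) F a)%N.
Proof.
move=> h; rewrite big_mkcond; apply: eq_bigr => a _.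
by case: ifP => // /negbFE /h ->.
Qed.

Lemma cardAnn j : (j <= s)%N -> #|Ann j| = (q ^ j)%N.
Proof.
elim: j => [_|j IH hj].
  rewrite expn0 -(card1 (0 : R)); apply: eq_card => x; by rewrite !inE expr0 mul1r.
rewrite card_sum.
rewrite (eq_bigr (fun x => (gamma ^+ j * (gamma * x) == 0)%R : nat)); last first.
  by move=> x _; rewrite /Ann inE exprSr mulrA.
rewrite (sum_gmul (fun a => (gamma ^+ j * a == 0)%R : nat)) cardAnn1 expnS; congr (_ * _)%N.
rewrite sum_nonunit_full; first by rewrite -IH ?(ltnW hj) // card_sum.
move=> a ha; apply/eqP; rewrite eqb0; apply/negP => /eqP h.
by have := unit_gpow_eq0 ha h; lia.
Qed.

Lemma cardR : #|R| = (q ^ s)%N.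
Proof. rewrite -cardAnn //; apply: eq_card => x; by rewrite !inE hs mul0r eqxx. Qed.

Lemma cardNU : #|[pred a : R | a \isn't a GRing.unit]| = (q ^ (s - 1))%N.
Proof.
apply/eqP; rewrite -(eqn_pmul2l q_gt0) -cardR_NU cardR -expnS; apply/eqP; congr (_ ^ _)%N; lia.
Qed.

Lemma cardU : #|[pred a : R | a \is a GRing.unit]| = ((q - 1) * q ^ (s - 1))%N.
Proof.
have := cardC [pred a : R | a \is a GRing.unit]; rewrite cardR.
have -> : #|[predC [pred a : R | a \is a GRing.unit]]| = #|[pred a : R | a \isn't a GRing.unit]|.
  by apply: eq_card => x; rewrite !inE.
rewrite cardNU => h; rewrite mulnBl mul1n -expnS (_ : (s - 1).+1 = s); [by rewrite -h addnK | lia]. Qed.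

Local Notation w := (wHom gamma s T).
Local Notation Q := (q ^ (s - 1))%N.

Lemma qs_eq : (q ^ s = q * Q)%N.
Proof. by rewrite -expnS; congr (_ ^ _)%N; lia. Qed.

Lemma w0 : w 0 = 0%N.
Proof. by rewrite /wHom eqxx. Qed.

Lemma inAnnP (x : R) : reflect (exists y, x = y * gamma ^+ (s - 1)) (gamma * x == 0).
Proof.
apply: (iffP eqP) => [/annP [d ->]|[y ->]]; first by exists d; rewrite mulrC.
by rewrite mulrCA -exprS (_ : (s - 1).+1 = s) ?hs ?mulr0 //; lia.
Qed.

Lemma w_exE (x : R) : [exists y : R, x == y * gamma ^+ (s - 1)] = (gamma * x == 0).
Proof.
apply/existsP/inAnnP => [[y /eqP ->]|[y ->]]; by exists y.
Qed.

Lemma w_unit (u x : R) : u \is a GRing.unit -> w (u * x) = w x.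
Proof.
move=> hu; rewrite /wHom !w_exE (mulrI_eq0 _ (mulrI hu)).
by rewrite mulrCA (mulrI_eq0 _ (mulrI hu)).
Qed.

Lemma s1_gamma0 : s = 1%N -> gamma = 0.
Proof. by move=> e; move: hs; rewrite e expr1. Qed.

Lemma w_ident (x : R) : (q * w x + Q * ((gamma * x != 0)%R : nat) = q ^ s * ((x != 0)%R : nat))%N.
Proof.
rewrite /wHom w_exE; have [->|hx] := eqVneq x 0; first by rewrite mulr0 eqxx /= !muln0.
case: eqP => /= [_|hg]; first by rewrite !muln0 !muln1 addn0 qs_eq.
have s2 : (2 <= s)%N.
  case: (ltngtP s 1) => [|h|h]; [lia|lia|]; by rewrite (s1_gamma0 h) mul0r in hg.
have e1 : Q = (q * q ^ (s - 2))%N by rewrite -expnS; congr (_ ^ _)%N; lia.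
have e2 : (q ^ s = q * (q * q ^ (s - 2)))%N by rewrite -e1 qs_eq.
rewrite e1 e2 muln1 /qT; have := q_gt0; set P := (q ^ (s - 2))%N; nia.
Qed.

Lemma sum_ind (P : pred R) (x : R) : (\sum_(c : R | P c) ((x == c)%R : nat) = P x)%N.
Proof.
case hPx: (P x).
  rewrite (bigD1 x) // eqxx big1 // => c /andP [_ hc]; by rewrite eq_sym (negbTE hc).
rewrite big1 // => c hc; case: eqP => // ex; by rewrite ex hc in hPx.
Qed.

Lemma line_count (l b : R) : l != 0 ->
  #|[pred r | gamma * (b + l * r) == 0]| = (q * #|[pred r | (b + l * r == 0)%R]|)%N.
Proof.
move=> hl; have [m [u [hm hu el]]] := F1 hl.
rewrite card_sum.
rewrite (eq_bigr (fun r => \sum_(c : R | (gamma * c == 0)%R) ((b + l * r == c)%R : nat))%N); last first.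
  by move=> r _; rewrite sum_ind.
rewrite exchange_big /= -cardAnn1 -sum_nat_const; apply: eq_bigr => c /eqP/annP [d ed].
set t := u^-1 * gamma ^+ (s - 1 - m) * d.
have ec : c = l * t.
  have eg : gamma ^+ (s - 1) = gamma ^+ m * gamma ^+ (s - 1 - m) by rewrite -exprD; congr (_ ^+ _); lia.
  by rewrite ed el /t eg !mulrA -(mulrA _ u) (mulrV hu) mulr1.
rewrite card_sum (reindex_inj (addIr t)) /=; apply: eq_bigr => r _.
by rewrite ec mulrDr addrA -{2}[l * t]add0r (inj_eq (addIr _)).
Qed.

Lemma sum_split_bool (F : R -> bool) :
  (\sum_(r : R) (F r : nat) + \sum_(r : R) (~~ F r : nat) = q ^ s)%N.
Proof.
rewrite -big_split /= -cardR -sum1_card; apply: eq_bigr => r _; by case: (F r).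
Qed.

Lemma sum_w_line (l b : R) : l != 0 ->
  (\sum_(r : R) w (b + l * r)%R = (q - 1) * Q * Q)%N.
Proof.
move=> hl.
have e : (q * \sum_(r : R) w (b + l * r)%R + Q * \sum_(r : R) ((gamma * (b + l * r) != 0)%R : nat)
          = q ^ s * \sum_(r : R) ((b + l * r != 0)%R : nat))%N.
  rewrite !big_distrr -big_split /=; apply: eq_bigr => r _; exact: w_ident.
have c0 := sum_split_bool (fun r => (b + l * r == 0)%R).
have c1 := sum_split_bool (fun r => (gamma * (b + l * r) == 0)%R).
have lc := line_count b hl.
rewrite !card_sum in lc.
move: e c0 c1 lc; rewrite qs_eq.
set S := (\sum_(r : R) w (b + l * r)%R)%N.
set A := (\sum_(r : R) ((b + l * r != 0)%R : nat))%N.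
set A1 := (\sum_(r : R) ((gamma * (b + l * r) != 0)%R : nat))%N.
set Z0 := (\sum_(r : R) ((b + l * r == 0)%R : nat))%N.
set Z1 := (\sum_(r : R) ((gamma * (b + l * r) == 0)%R : nat))%N.
move=> e c0 c1 lc; have := q_gt0; nia.
Qed.

Local Notation unitp := [pred a : R | a \is a GRing.unit].
Local Notation nunitp := [pred a : R | a \isn't a GRing.unit].

Fixpoint SA (k : nat) (l : nat -> R) (g : R -> nat) : nat :=
  if k is k'.+1 then (\sum_(r : R) SA k' (fun i => l i.+1) (fun z => g (l 0%N * r + z)%R))%N
  else g 0.

Fixpoint BB (k : nat) (l : nat -> R) (g : R -> nat) : nat :=
  if k is k'.+1 then
    (SA k' (fun i => l i.+1) (fun z => g (l 0%N + z)%R) +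
     \sum_(a : R | a \isn't a GRing.unit) BB k' (fun i => l i.+1) (fun z => g (l 0%N * a + z)%R))%N
  else 0%N.

Fixpoint UU (k : nat) (l : nat -> R) (g : R -> nat) : nat :=
  if k is k'.+1 then
    (\sum_(a : R | a \is a GRing.unit) SA k' (fun i => l i.+1) (fun z => g (l 0%N * a + z)%R) +
     \sum_(a : R | a \isn't a GRing.unit) UU k' (fun i => l i.+1) (fun z => g (l 0%N * a + z)%R))%N
  else 0%N.

Fixpoint NN (k : nat) (l : nat -> R) (g : R -> nat) : nat :=
  if k is k'.+1 then
    (\sum_(a : R | a \isn't a GRing.unit) NN k' (fun i => l i.+1) (fun z => g (l 0%N * a + z)%R))%N
  else g 0.

Lemma SA_lin (I : finType) (P : pred I) (F : I -> R -> nat) k l :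
  SA k l (fun z => \sum_(i | P i) F i z)%N = (\sum_(i | P i) SA k l (F i))%N.
Proof.
elim: k l F => [//|k IH] l F /=.
rewrite exchange_big; apply: eq_bigr => r _; exact: (IH _ (fun i z => F i (l 0%N * r + z)%R)).
Qed.

Lemma UU_lin (I : finType) (P : pred I) (F : I -> R -> nat) k l :
  UU k l (fun z => \sum_(i | P i) F i z)%N = (\sum_(i | P i) UU k l (F i))%N.
Proof.
elim: k l F => [l F|k IH l F] /=; first by rewrite big1.
rewrite big_split /=; congr (_ + _)%N; rewrite exchange_big; apply: eq_bigr => r _.
  exact: (SA_lin P (fun i z => F i (l 0%N * r + z)%R)).
exact: (IH _ (fun i z => F i (l 0%N * r + z)%R)).
Qed.

Lemma BB_lin (I : finType) (P : pred I) (F : I -> R -> nat) k l :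
  BB k l (fun z => \sum_(i | P i) F i z)%N = (\sum_(i | P i) BB k l (F i))%N.
Proof.
elim: k l F => [l F|k IH l F] /=; first by rewrite big1.
rewrite big_split /=; congr (_ + _)%N.
  exact: (SA_lin P (fun i z => F i (l 0%N + z)%R)).
rewrite exchange_big; apply: eq_bigr => r _.
exact: (IH _ (fun i z => F i (l 0%N * r + z)%R)).
Qed.

Lemma SA_scale_unit k l (h : R -> nat) (c : R) : c \is a GRing.unit ->
  SA k l (fun z => h (c * z)) = SA k l h.
Proof.
move=> hc; elim: k l h => [l h|k IH l h] /=; first by rewrite mulr0.
rewrite [RHS](reindex_inj (mulrI hc)) /=; apply: eq_bigr => r _.
have -> : (fun z => h (c * (l 0%N * r + z)%R)) =
          (fun z => (fun y => h (l 0%N * (c * r) + y)) (c * z)).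
  by apply: functional_extensionality => z; rewrite mulrDr mulrCA.
exact: IH.
Qed.

Lemma SA_scale k l (g : R -> nat) (c : R) :
  SA k l (fun z => g (c * z)) = SA k (fun i => c * l i) g.
Proof.
elim: k l g => [l g|k IH l g] /=; first by rewrite mulr0.
apply: eq_bigr => r _.
have -> : (fun z => g (c * (l 0%N * r + z)%R)) =
          (fun z => (fun y => g (c * l 0%N * r + y)) (c * z)).
  by apply: functional_extensionality => z; rewrite mulrDr mulrA.
exact: IH.
Qed.

Definition uinv (g : R -> nat) := forall u z, u \is a GRing.unit -> g (u * z) = g z.

Lemma proj_lemma k l g : uinv g -> (#|unitp| * BB k l g = UU k l g)%N.
Proof.
elim: k l g => [l g _|k IH l g hg] /=; first by rewrite muln0.
rewrite mulnDr; congr (_ + _)%N.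
  rewrite -sum_nat_const; apply: eq_big => [a|a]; first by rewrite !inE.
  rewrite inE => ha.
  transitivity (SA k (fun i => l i.+1) (fun z => (fun y => g (l 0%N + y)%R) (a^-1 * z)%R)).
    by symmetry; apply: (SA_scale_unit k (fun i => l i.+1) (fun y => g (l 0%N + y)%R)); rewrite unitrV.
  congr SA; apply: functional_extensionality => z.
  by rewrite -(hg a) // mulrDr (mulVKr ha) mulrC.
rewrite -BB_lin IH; first by rewrite UU_lin.
move=> u z hu /=.
rewrite (reindex_inj (mulrI hu)) /=; apply: eq_big => [a|a ha].
  by rewrite unitrMr.
by rewrite -[RHS](hg u) // mulrDr mulrCA.
Qed.

Lemma SA_UN k l g : SA k l g = (UU k l g + NN k l g)%N.
Proof.
elim: k l g => [//|k IH] l g /=.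
rewrite (bigID (fun a : R => a \is a GRing.unit)) /= -addnA; congr (_ + _)%N.
by rewrite -big_split /=; apply: eq_bigr => a _; rewrite IH.
Qed.

Lemma NN_scale k l g :
  (#|Ann 1| ^ k * NN k l g)%N = SA k l (fun z => g (gamma * z)%R).
Proof.
elim: k l g => [l g|k IH l g] /=; first by rewrite expn0 mul1n mulr0.
transitivity (\sum_(r : R) (fun a => #|Ann 1| ^ k * NN k (fun i => l i.+1) (fun y => g (l 0%N * a + y)%R))%N (gamma * r)%R)%N.
  rewrite /= (sum_gmul (fun a => #|Ann 1| ^ k * NN k (fun i => l i.+1) (fun y => g (l 0%N * a + y)%R))%N).
  by rewrite -big_distrr /= mulnA -expnS.
apply: eq_bigr => r _; rewrite IH; congr SA; apply: functional_extensionality => z.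
by rewrite mulrDr mulrCA.
Qed.

Lemma w_uinv : uinv w.
Proof. move=> u z hu; exact: w_unit. Qed.

Lemma exists_ordS k (l : nat -> R) :
  [exists i : 'I_k.+1, l i != 0] = (l 0%N != 0) || [exists i : 'I_k, l i.+1 != 0].
Proof.
apply/existsP/orP => [[[[|i] hi] /= hl]|[h|/existsP [i hi]]]; first by left.
- by right; apply/existsP; exists (Ordinal (hi : i < k)%N).
- by exists ord0.
- by exists (lift ord0 i).
Qed.

Lemma sum_const_R (c : nat) : (\sum_(r : R) c = q ^ s * c)%N.
Proof. by rewrite sum_nat_const -cardR. Qed.

Lemma SA_formula k l b :
  SA k l (fun z => w (b + z)%R) =
  (if [exists i : 'I_k, (l i != 0)%R] then (q - 1) * Q * q ^ (s * k - 1)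
   else q ^ (s * k) * w b)%N.
Proof.
elim: k l b => [l b|k IH l b] /=.
  rewrite addr0 muln0 expn0 mul1n; case: existsP => // [[[]]] //.
have e : forall r : R, (fun z => w (b + (l 0%N * r + z))%R) =
   (fun z => w ((b + l 0%N * r) + z)%R).
  by move=> r; apply: functional_extensionality => z; rewrite addrA.
rewrite (eq_bigr _ (fun r _ => f_equal _ (e r))).
rewrite (eq_bigr _ (fun r _ => IH _ _)) /= exists_ordS.
case E: [exists i : 'I_k, l i.+1 != 0].
  have k0 : (0 < k)%N by case/existsP: E => [[i hi]] _; lia.
  rewrite orbT sum_const_R.
  rewrite mulnCA; congr (_ * _)%N; rewrite -expnD; congr (_ ^ _)%N; nia.
rewrite orbF -big_distrr /=.
case: eqP => [-> | /eqP hl] /=.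
  rewrite (eq_bigr (fun _ => w b)) => [|r _]; last by rewrite mul0r addr0.
  rewrite sum_const_R mulnA -expnD; congr (_ ^ _ * _)%N; nia.
rewrite sum_w_line //.
rewrite (_ : s * k.+1 - 1 = s * k + (s - 1))%N ?expnD; last by nia.
set A := (q ^ (s * k))%N; set B := Q; nia.
Qed.

Definition rhon (n j : nat) : R :=
  \sum_(i < n) T`_((j %/ q ^ i) %% q)%N * gamma ^+ i.

Lemma rhoE j : rho gamma s T j = rhon s j.
Proof. by []. Qed.

Lemma rhonS n j : rhon n.+1 j = T`_(j %% q) + gamma * rhon n (j %/ q)%N.
Proof.
rewrite /rhon big_ord_recl /= expn0 divn1 expr0 mulr1; congr (_ + _).
rewrite mulr_sumr; apply: eq_bigr => i _.
by rewrite /bump /= add1n expnS divnMA exprS mulrCA.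
Qed.

Lemma rhon_surj n (x : R) : exists2 j, (j < q ^ n)%N & exists y, x - rhon n j = gamma ^+ n * y.
Proof.
elim: n x => [|n IH] x.
  by exists 0%N; [rewrite expn0 | exists x; rewrite /rhon big_ord0 subr0 expr0 mul1r].
have [i [[y0 hy0] _]] := hT x.
have [j' hj' [y hy]] := IH y0.
exists (i + q * j')%N.
  have := ltn_ord i; rewrite expnS; nia.
exists y; rewrite rhonS.
have hiq := ltn_ord i.
rewrite (_ : ((i + q * j') %% q = i)%N); last by rewrite addnC mulnC modnMDl modn_small.
rewrite (_ : ((i + q * j') %/ q = j')%N); last first.
  by rewrite addnC mulnC divnMDl ?q_gt0 // divn_small // addn0.
rewrite opprD addrA hy0 expr1 exprS -mulrA -hy mulrBr; by rewrite mulrC.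
Qed.

Definition rhoo (j : 'I_(q ^ s)) : R := rho gamma s T j.

Lemma rhoo_bij : bijective rhoo.
Proof.
have surj : forall r : R, r \in codom rhoo.
  move=> r; have [j hj [y hy]] := rhon_surj s r.
  move: hy; rewrite hs mul0r => /eqP; rewrite subr_eq0 => /eqP ->.
  exact: (codom_f rhoo (Ordinal hj)).
have hinj : injective rhoo.
  have : #|[seq rhoo x | x in 'I_(q ^ s)]| == #|'I_(q ^ s)|.
    rewrite card_ord; apply/eqP; transitivity #|R|; last exact: cardR.
    apply: eq_card => r; by have := surj r; rewrite /codom => ->.
  by move/image_injP => h x y; apply: h.
apply: inj_card_bij => //; by rewrite card_ord cardR.
Qed.

Lemma sum_rho (f : R -> nat) :
  (\sum_(j < q ^ s) f (rho gamma s T j) = \sum_(r : R) f r)%N.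
Proof.
rewrite [RHS](reindex rhoo) //; exact: onW_bij rhoo_bij.
Qed.

Lemma T_nonunit b : (b < q)%N -> (T`_b \isn't a GRing.unit) = (b == 0%N).
Proof.
move=> hb; apply/idP/eqP => [h|->]; last by rewrite hT0 unitr0.
have [i [_ hu]] := hT 0.
have e0 := hu (Ordinal q_gt0); have eb := hu (Ordinal hb).
have : Ordinal hb = Ordinal q_gt0.
  rewrite -eb; first by rewrite e0 // /in_gpow hT0 subr0; exists 0; rewrite mul0r.
  by apply/hmax; rewrite sub0r unitrN.
by case.
Qed.

Lemma nonunit_addg (t y : R) : ((t + gamma * y) \isn't a GRing.unit) = (t \isn't a GRing.unit).
Proof.
apply/idP/idP => h; last exact: nonunitD h (nonunit_gmul y).
have -> : t = (t + gamma * y) + gamma * (- y) by rewrite mulrN addrK.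
exact: nonunitD h (nonunit_gmul _).
Qed.

Lemma rho_nonunit j : (rho gamma s T j \isn't a GRing.unit) = (j %% q == 0)%N.
Proof.
rewrite rhoE (_ : s = (s - 1).+1); last by lia.
by rewrite rhonS nonunit_addg T_nonunit // ltn_mod q_gt0.
Qed.

Lemma sum_split (m n : nat) (F : nat -> nat) :
  (\sum_(j < m * n) F j = \sum_(a < m) \sum_(b < n) F (a * n + b))%N.
Proof.
elim: m => [|m IH]; first by rewrite mul0n !big_ord0.
rewrite mulSnr big_split_ord /= IH big_ord_recr /=; congr (_ + _)%N.
Qed.

Lemma sum_agamma (f : R -> nat) :
  (\sum_(a < q ^ (s - 1)) f (agamma gamma s T a) = \sum_(x : R | x \isn't a GRing.unit) f x)%N.
Proof.
rewrite [RHS]big_mkcond /=.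
transitivity (\sum_(j < q ^ s) (fun x => if x \isn't a GRing.unit then f x else 0%N) (rho gamma s T j))%N; last first.
  exact: (sum_rho (fun x => if x \isn't a GRing.unit then f x else 0%N)).
rewrite (_ : (q ^ s = q ^ (s - 1) * q)%N); last by rewrite mulnC qs_eq.
rewrite (sum_split _ _ (fun j => if rho gamma s T j \isn't a GRing.unit then f (rho gamma s T j) else 0%N)).
apply: eq_bigr => a _.
rewrite (bigD1 (Ordinal q_gt0)) //= big1 => [|b hb]; last first.
  rewrite rho_nonunit modnMDl modn_small ?ltn_ord //.
  by case: eqP => // hb0; move: hb; rewrite -val_eqE /= hb0 eqxx.
by rewrite addn0 rho_nonunit addn0 modnMl /= /agamma /qT mulnC.
Qed.

Local Notation Ga := (Galpha gamma s T).
Local Notation Gb := (Gbeta gamma s T).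
Local Notation nb := (nbeta s T).

Lemma GalphaS k r j : (0 < k)%N ->
  Ga k.+1 r j = if r is r'.+1 then Ga k r' (j %% q ^ (s * k))%N else rho gamma s T (j %/ q ^ (s * k))%N.
Proof. by case: k => // k _; case: r. Qed.

Lemma GbetaS k r j : (0 < k)%N ->
  Gb k.+1 r j = if (j < q ^ (s * k))%N then (if r is r'.+1 then Ga k r' j else 1)
    else (if r is r'.+1 then Gb k r' ((j - q ^ (s * k)) %% nb k)%N
          else agamma gamma s T ((j - q ^ (s * k)) %/ nb k)%N).
Proof. by case: k => // k _; case: r. Qed.

Lemma nbetaS k : (0 < k)%N -> nb k.+1 = (q ^ (s * k) + q ^ (s - 1) * nb k)%N.
Proof. by case: k. Qed.

Lemma nbeta_gt0 k : (0 < k)%N -> (0 < nb k)%N.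
Proof. case: k => // [[|k]] _ //=; rewrite /qT; have := q_gt0; move=> h; rewrite addn_gt0 expn_gt0 h //. Qed.

Lemma sum_recl k (F : nat -> R) : \sum_(r < k.+1) F r = F 0%N + \sum_(r < k) F r.+1.
Proof. by rewrite big_ord_recl; congr (_ + _); apply: eq_bigr => i _; rewrite lift0. Qed.

Lemma idx_alpha k (l : nat -> R) (h : R -> nat) : (0 < k)%N ->
  (\sum_(j < q ^ (s * k)) h (\sum_(r < k) l r * Ga k r j)%R = SA k l h)%N.
Proof.
elim: k l h => // [[|k]] IH l h _.
  rewrite muln1 /=; rewrite -(sum_rho (fun x => h (l 0%N * x + 0)%R)); apply: eq_bigr => j _.
  by rewrite big_ord1 addr0.
rewrite (_ : (s * k.+2 = s + s * k.+1)%N); last by lia.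
rewrite expnD (sum_split _ _ (fun j => h (\sum_(r < k.+2) l r * Ga k.+2 r j)%R)).
change (SA k.+2 l h) with (\sum_(r : R) SA k.+1 (fun i => l i.+1) (fun z => h (l 0%N * r + z)%R))%N.
rewrite -(sum_rho (fun x => SA k.+1 (fun i => l i.+1) (fun z => h (l 0%N * x + z)%R))).
apply: eq_bigr => a _; rewrite -IH //; apply: eq_bigr => b _; congr h.
have hN : (0 < q ^ (s * k.+1))%N by rewrite expn_gt0 q_gt0.
rewrite (sum_recl _ (fun r => l r * Ga k.+2 r (a * q ^ (s * k.+1) + b)%N)).
rewrite GalphaS // divnMDl // divn_small ?ltn_ord // addn0; congr (_ + _).
apply: eq_bigr => r _; rewrite GalphaS // modnMDl modn_small //.
Qed.

Lemma idx_beta k (l : nat -> R) (g : R -> nat) : (0 < k)%N ->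
  (\sum_(j < nb k) g (\sum_(r < k) l r * Gb k r j)%R = BB k l g)%N.
Proof.
elim: k l g => // [[|k]] IH l g _.
  change (nb 1) with 1%N; rewrite big_ord1 big_ord1 /= big1 // addn0 addr0 mulr1 //.
have hk : (0 < k.+1)%N by [].
rewrite nbetaS // big_split_ord; congr (_ + _)%N.
  rewrite -(idx_alpha (fun i => l i.+1) (fun z => g (l 0%N + z)%R) hk).
  apply: eq_bigr => j _; congr g.
  rewrite (sum_recl _ (fun r => l r * Gb k.+2 r (lshift _ j))).
  rewrite (GbetaS 0 (lshift _ j) hk) /= ltn_ord mulr1.
  congr (_ + _); apply: eq_bigr => r _; by rewrite (GbetaS r.+1 (lshift _ j) hk) /= ltn_ord.
have hN := nbeta_gt0 hk.
rewrite (sum_split _ _ (fun i => g (\sum_(r < k.+2) l r * Gb k.+2 r (q ^ (s * k.+1) + i)%N)%R)).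
rewrite -(sum_agamma (fun x => BB k.+1 (fun i => l i.+1) (fun z => g (l 0%N * x + z)%R))).
apply: eq_bigr => a _; rewrite -IH //; apply: eq_bigr => b _; congr g.
rewrite (sum_recl _ (fun r => l r * Gb k.+2 r (q ^ (s * k.+1) + (a * nb k.+1 + b))%N)).
have hlt : (q ^ (s * k.+1) + (a * nb k.+1 + b) < q ^ (s * k.+1))%N = false.
  by rewrite ltnNge leq_addr.
rewrite (GbetaS 0 _ hk) hlt addKn divnMDl // divn_small ?ltn_ord // addn0; congr (_ + _).
apply: eq_bigr => r _; rewrite (GbetaS r.+1 _ hk) hlt addKn modnMDl modn_small //.
Qed.

Lemma BB_formula k (l : nat -> R) : (0 < k)%N -> [exists i : 'I_k, l i != 0] ->
  BB k l w = (if [forall i : 'I_k, (gamma * l i == 0)%R] then q ^ (s * k - 1)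
              else q ^ (s * k - k - 1) * (q ^ k - 1))%N.
Proof.
move=> k0 hex.
have hP := proj_lemma k l w_uinv.
have hSU := SA_UN k l w.
have hNS := NN_scale k l w.
rewrite SA_scale in hNS.
have w0f : forall l', SA k l' w = SA k l' (fun z => w (0 + z)%R).
  by move=> l'; congr SA; apply: functional_extensionality => z; rewrite add0r.
rewrite w0f SA_formula hex in hSU.
rewrite w0f SA_formula /= in hNS.
rewrite cardU in hP; rewrite cardAnn1 in hNS.
have hq := q_ge2.
have hQ : (0 < Q)%N by rewrite expn_gt0 q_gt0.
have hqk : (0 < q ^ k)%N by rewrite expn_gt0 q_gt0.
case: ifP => hall.
  have hex' : [exists i : 'I_k, gamma * l i != 0] = false.
    by apply/negbTE; rewrite negb_exists; apply/forallP => i; rewrite negbK (forallP hall i).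
  rewrite hex' w0 muln0 in hNS.
  have hN0 : NN k l w = 0%N by move/eqP: hNS; rewrite muln_eq0 (negbTE (lt0n_neq0 hqk)) => /eqP.
  rewrite hN0 addn0 -hP in hSU.
  apply/eqP; rewrite -(@eqn_pmul2l ((q - 1) * Q)%N); first by rewrite hSU.
  by rewrite muln_gt0 hQ; lia.
have hex' : [exists i : 'I_k, gamma * l i != 0].
  by move/negbT: hall; rewrite negb_forall.
rewrite hex' in hNS.
have s2 : (2 <= s)%N.
  case: (ltngtP s 1) => [|h|h]; [lia|lia|].
  by case/existsP: hex' => i; rewrite (s1_gamma0 h) mul0r eqxx.
set X := (q ^ (s * k - k - 1))%N.
have eC : (q ^ (s * k - 1) = q ^ k * X)%N by rewrite -expnD; congr (_ ^ _)%N; nia.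
rewrite eC in hSU hNS.
have pos : (0 < q ^ k * ((q - 1) * Q))%N by rewrite !muln_gt0 hqk hQ; lia.
apply/eqP; rewrite -(eqn_pmul2l pos).
move: hSU hNS; rewrite -hP.
set BBv := BB k l w; set NNv := NN k l w; set Y := (q ^ k)%N.
move=> hSU hNS; apply/eqP.
have hX : (1 <= Y)%N by [].
nia.
Qed.

Lemma V1 (x : R) m : is_nu gamma x m -> x != 0 /\ (m < s)%N.
Proof.
move=> [[b hb ex] hm].
have ms : (m < s)%N.
  rewrite ltnNge; apply/negP => sm.
  have x0 : x = 0 by rewrite ex (_ : m = (m - s) + s)%N ?exprD ?hs ?mulr0 ?mul0r //; lia.
  have := hm m.+1 1 (unitr1 _); rewrite mulr1 x0 (_ : m.+1 = (m.+1 - s) + s)%N ?exprD ?hs ?mulr0; last by lia.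
  by move=> /(_ erefl); lia.
split => //; apply/eqP => x0; rewrite x0 in ex.
by have := unit_gpow_eq0 hb (esym ex); lia.
Qed.

Lemma V2 (x u : R) m : (m < s)%N -> u \is a GRing.unit -> x = gamma ^+ m * u -> is_nu gamma x m.
Proof.
move=> ms hu ex; split; first by exists u.
move=> m' b hb e; rewrite leqNgt; apply/negP => mm.
have e2 : gamma ^+ m * (u - gamma ^+ (m' - m) * b) = 0.
  rewrite mulrBr -ex e mulrA -exprD (_ : (m + (m' - m) = m')%N) ?subrr //; lia.
have hv : (u - gamma ^+ (m' - m) * b) \is a GRing.unit.
  apply/negPn/negP => hn.
  have : (u - gamma ^+ (m' - m) * b + gamma * (gamma ^+ (m' - m).-1 * b)) \isn't a GRing.unit.
    exact: nonunitD hn (nonunit_gmul _).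
  rewrite mulrA -exprS (_ : ((m' - m).-1.+1 = m' - m)%N); last by lia.
  by rewrite subrK hu.
by have := unit_gpow_eq0 hv e2; lia.
Qed.

Lemma V3 (x : R) : x != 0 -> exists m, is_nu gamma x m.
Proof. move=> /F1 [m [u [h1 h2 h3]]]; exists m; exact: V2 h3. Qed.

Lemma V4 (x : R) m : is_nu gamma x m -> gamma * x = 0 -> m = (s - 1)%N.
Proof.
move=> hn; have [_ ms] := V1 hn; case: hn => [[b hb ex] _] hg.
rewrite ex mulrA -exprS in hg; have := unit_gpow_eq0 hb hg; lia.
Qed.

Lemma V6 (x : R) : is_nu gamma x (s - 1) -> gamma * x = 0.
Proof.
case => [[b hb ->] _]; rewrite mulrA -exprS (_ : (s - 1).+1 = s)%N ?hs ?mul0r //; lia.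
Qed.

Lemma vnu_exists n (C : 'rV[R]_n) : (exists i m0, is_nu gamma (C ord0 i) m0) -> exists m, vnu gamma C m.
Proof.
move=> [i [m0 h]]; elim/ltn_ind: m0 i h => m0 IH i h.
case: (classic (forall i' m', is_nu gamma (C ord0 i') m' -> (m0 <= m')%N)) => H.
  by exists m0; split => //; exists i.
have [i' Hi] := not_all_ex_not _ _ H.
have [m' Hm] := not_all_ex_not _ _ Hi.
have [h' hlt] := imply_to_and _ _ Hm.
apply: (IH m' _ i' h'); lia.
Qed.

Lemma pos_witness n (f : 'I_n -> R) : (0 < \sum_(j < n) w (f j))%N -> exists j, f j != 0.
Proof.
case: (boolP [exists j, f j != 0]) => [/existsP //|hn].
rewrite big1 // => j _; move: hn; rewrite negb_exists => /forallP /(_ j); rewrite negbK => /eqP ->.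
exact: w0.
Qed.

Lemma BB_pos k (l : nat -> R) : (0 < k)%N -> [exists i : 'I_k, l i != 0] -> (0 < BB k l w)%N.
Proof.
move=> k0 hex; rewrite BB_formula //; have := q_ge2 => hq.
case: ifP => _; first by rewrite expn_gt0; lia.
rewrite muln_gt0 expn_gt0 subn_gt0; apply/andP; split; first lia.
by rewrite -{1}(expn0 q) ltn_exp2l.
Qed.

Lemma entryE k (lam : 'rV[R]_k) j :
  (lam *m Gbeta_mx gamma s T k) ord0 j = \sum_(r < k) lam ord0 r * Gb k r j.
Proof. rewrite !mxE; apply: eq_bigr => r _; by rewrite mxE. Qed.

Theorem main_sec (k : nat) (hk : (1 <= k)%N)
  (c : 'rV[R]_(nbeta s T k))
  (hc : exists lam : 'rV[R]_k, c = lam *m Gbeta_mx gamma s T k) :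
  (vnu gamma c (s - 1) -> wHom_vec gamma s T c = (q ^ (s * k - 1))%N) /\
  ((exists2 m, (m < s - 1)%N & vnu gamma c m) ->
     wHom_vec gamma s T c = (q ^ (s * k - k - 1) * (q ^ k - 1))%N) /\
  (~ vnu gamma c (s - 1) -> ~ (exists2 m, (m < s - 1)%N & vnu gamma c m) ->
     wHom_vec gamma s T c = 0%N).
Proof.
case: hc => lam hc; subst c.
case: k hk lam => // k' _ lam.
set l := fun r : nat => lam ord0 (inord r).
have hl : forall r : 'I_k'.+1, l r = lam ord0 r by move=> r; rewrite /l inord_val.
have ent : forall j, (lam *m Gbeta_mx gamma s T k'.+1) ord0 j = \sum_(r < k'.+1) l r * Gb k'.+1 r j.
  by move=> j; rewrite entryE; apply: eq_bigr => r _; rewrite hl.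
have entg : forall j, gamma * (lam *m Gbeta_mx gamma s T k'.+1) ord0 j =
    \sum_(r < k'.+1) (fun i => gamma * l i) r * Gb k'.+1 r j.
  by move=> j; rewrite ent mulr_sumr; apply: eq_bigr => r _; rewrite mulrA.
have W : wHom_vec gamma s T (lam *m Gbeta_mx gamma s T k'.+1) = BB k'.+1 l w.
  rewrite /wHom_vec -idx_beta //; apply: eq_bigr => j _; by rewrite ent.
have k0 : (0 < k'.+1)%N by [].
set C := lam *m Gbeta_mx gamma s T k'.+1.
have hexC : forall i, C ord0 i != 0 -> [exists i : 'I_k'.+1, l i != 0].
  move=> i hi; case: (boolP [exists i : 'I_k'.+1, l i != 0]) => // hn; exfalso.
  move: hn; rewrite negb_exists => /forallP hall.
  move: hi; rewrite /C ent big1 ?eqxx // => r _.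
  by move: (hall r); rewrite negbK => /eqP ->; rewrite mul0r.
have hgC : forall i, gamma * C ord0 i != 0 -> ~~ [forall i : 'I_k'.+1, gamma * l i == 0].
  move=> i hi; apply/negP => /forallP hall.
  move: hi; rewrite /C entg big1 ?eqxx // => r _.
  by move/eqP: (hall r) => /= ->; rewrite mul0r.
have lamC : [exists i : 'I_k'.+1, l i != 0] -> exists j, C ord0 j != 0.
  move=> hex; apply: pos_witness; rewrite /C -/(wHom_vec _ _ _ _) W; exact: BB_pos.
split; [|split].
- move=> hv; have [[i hi] hmin] := hv.
  have hex := hexC i (proj1 (V1 hi)).
  rewrite W BB_formula // ifT //; apply/forallP => r /=; apply/negPn/negP => hr.
  have hex' : [exists i : 'I_k'.+1, (fun i => gamma * l i) i != 0] by apply/existsP; exists r.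
  have [j hj] : exists j, gamma * C ord0 j != 0.
    have eqs : (\sum_(j < nb k'.+1) w (gamma * C ord0 j)%R = BB k'.+1 (fun i => gamma * l i)%R w)%N.
      by rewrite -idx_beta //; apply: eq_bigr => j _; rewrite /C entg.
    apply: pos_witness; rewrite eqs.
    exact: BB_pos.
  have [m hm] : exists m, is_nu gamma (C ord0 j) m.
    by apply: V3; apply/eqP => e; move: hj; rewrite e mulr0 eqxx.
  have hm2 := hmin j m hm; have [_ ms] := V1 hm.
  have em : m = (s - 1)%N by lia.
  by rewrite em in hm; move: hj; rewrite (V6 hm) eqxx.
- move=> [m ms [[i hi] _]].
  have [hi0 _] := V1 hi.
  have hex := hexC i hi0.
  have hg : gamma * C ord0 i != 0 by apply/eqP => /(V4 hi); lia.
  by rewrite W BB_formula // ifF //; apply/negbTE; exact: hgC hg.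
- move=> h1 h2.
  case: (boolP [exists i : 'I_k'.+1, l i != 0]) => [hex|hn].
    exfalso; have [j hj] := lamC hex.
    have [m0 hm0] := V3 hj.
    have [m hm] : exists m, vnu gamma C m by apply: vnu_exists; exists j, m0.
    have [[i hi] _] := hm; have [_ ms] := V1 hi.
    case: (ltngtP m (s - 1)) => [lt|gt|eq]; first by apply: h2; exists m.
      lia.
    by apply: h1; rewrite -eq.
  rewrite /wHom_vec big1 // => j _; rewrite ent big1 ?w0 // => r _.
  move: hn; rewrite negb_exists => /forallP /(_ r); rewrite negbK => /eqP ->; exact: mul0r.
Qed.

End Chain.

Unset Implicit Arguments.
Set Strict Implicit.

Theorem proposition3p24 (R : finComUnitRingType) (gamma : R) (s : nat) (T : seq R)
  (hmax : forall x : R, x \isn't a GRing.unit <-> in_gpow gamma 1 x)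
  (hs0 : (0 < s)%N) (hs : gamma ^+ s = 0) (hs1 : gamma ^+ (s - 1) != 0)
  (hT0 : T`_0 = 0) (hT1 : T`_1 = 1)
  (hT : forall x : R, exists! i : 'I_(size T), in_gpow gamma 1 (x - T`_i))
  (k : nat) (hk : (1 <= k)%N)
  (c : 'rV[R]_(nbeta s T k))
  (hc : exists lam : 'rV[R]_k, c = lam *m Gbeta_mx gamma s T k) :
  let q := size T in
  (vnu gamma c (s - 1) -> wHom_vec gamma s T c = (q ^ (s * k - 1))%N) /\
  ((exists2 m, (m < s - 1)%N & vnu gamma c m) ->
     wHom_vec gamma s T c = (q ^ (s * k - k - 1) * (q ^ k - 1))%N) /\
  (~ vnu gamma c (s - 1) -> ~ (exists2 m, (m < s - 1)%N & vnu gamma c m) ->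
     wHom_vec gamma s T c = 0%N).
Proof.
move=> q; exact: (main_sec hmax hs0 hs hs1 hT0 hT1 hT hk hc).
Qed.
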